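(* Let $(X,d)$ be a metric space and $x\in X$ such that $\limsup_{r\to0}n_{\lambda r}(\overline{B}_X(x,r))<\infty$ for all $\lambda>0$. Then $$\overline{\delta}_X(x)=\limsup_{r\to0}\sup_{T\in\mathcal{T}_xX}\frac{\log n_r(\overline{B}_T(x,1))}{\log 1/r},\qquad \underline{\delta}_X(x)=\liminf_{r\to0}\inf_{T\in\mathcal{T}_xX}\frac{\log n_r(\overline{B}_T(x,1))}{\log 1/r}.$$
   Context: $\overline{B}_X(x,r)=\{y:d(x,y)\le r\}$; $n_r(A)$ is the minimum number of open balls of radius $r$ needed to cover $A$. The lower and upper tangential dimensions of $X$ at $x$ are $\underline{\delta}_X(x)=\liminf_{\lambda\to0}\liminf_{r\to0}\frac{\log n(\lambda r,\overline{B}_X(x,r))}{\log1/\lambda}$ and $\overline{\delta}_X(x)=\limsup_{\lambda\to0}\limsup_{r\to0}\frac{\log n(\lambda r,\overline{B}_X(x,r))}{\log1/\lambda}$. A tangent set of $X$ at $x$ is any limit point as $t\to\infty$ of $(X,x,td)$ (metric rescaled by $t$, base point $x$) in the pointed Gromov–Hausdorff topology; $\mathcal{T}_xX$ is the set of tangent sets, and for $T\in\mathcal{T}_xX$, $\overline{B}_T(x,1)$ is the closed ball of radius 1 about the base point of $T$ (still denoted $x$). *)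

(* Defs.v *)
From HB Require Import structures.
From mathcomp Require Import all_boot all_order all_algebra.
From mathcomp Require Import all_classical all_reals all_analysis.
Set Implicit Arguments. Unset Strict Implicit. Unset Printing Implicit Defensive.
Import Order.TTheory GRing.Theory Num.Theory.
Local Open Scope classical_set_scope.
Local Open Scope ring_scope.

Record metricSpace (R : realType) := MetricSpace {
  mcarrier :> Type;
  md : mcarrier -> mcarrier -> R;
  md_eq0 : forall a b, md a b = 0 <-> a = b;
  md_sym : forall a b, md a b = md b a;
  md_tri : forall a b c, md a c <= md a b + md b c }.

Definition cball {R : realType} {T : Type} (d : T -> T -> R) (x : T) (r : R)
  : set T := [set y | d x y <= r].

Definition oball {R : realType} {T : Type} (d : T -> T -> R) (x : T) (r : R)
  : set T := [set y | d x y < r].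

(* n_r(A): minimum number of open balls of radius r (centers anywhere in the
   ambient space) needed to cover A; +oo if no finite cover exists. *)
Definition ncov {R : realType} {T : Type} (d : T -> T -> R) (r : R) (A : set T)
  : \bar R :=
  ereal_inf [set (n%:R)%:E | n in
    [set n : nat | exists c : nat -> T,
       A `<=` [set y | exists2 i : nat, (i < n)%N & d (c i) y < r]]].

Definition elog {R : realType} (e : \bar R) : \bar R :=
  match e with
  | EFin v => (ln v)%:E
  | +oo%E => +oo%E
  | -oo%E => -oo%E
  end.

Definition limsup0 {R : realType} (f : R -> \bar R) : \bar R :=
  ereal_inf [set ereal_sup (f @` [set r | 0 < r < δ]) | δ in [set δ : R | 0 < δ]].
Definition liminf0 {R : realType} (f : R -> \bar R) : \bar R :=
  ereal_sup [set ereal_inf (f @` [set r | 0 < r < δ]) | δ in [set δ : R | 0 < δ]].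

Definition logratio {R : realType} (n : \bar R) (l : R) : \bar R :=
  (elog n * ((ln (l^-1))^-1)%:E)%E.

Definition upper_tan_dim {R : realType} (X : metricSpace R) (x : X) : \bar R :=
  limsup0 (fun l => limsup0 (fun r =>
    logratio (ncov (@md R X) (l * r) (cball (@md R X) x r)) l)).
Definition lower_tan_dim {R : realType} (X : metricSpace R) (x : X) : \bar R :=
  liminf0 (fun l => liminf0 (fun r =>
    logratio (ncov (@md R X) (l * r) (cball (@md R X) x r)) l)).

(* Pointed Gromov-Hausdorff convergence (Burago-Burago-Ivanov, Def. 8.1.1)
   of the rescaled pointed spaces (X, x, t_n d) to (T, p): for every r, eps > 0,
   for all large n there is a map f from the ball B_{t_n d}(x, r) to T with
   f x = p, distortion < eps, and whose image has eps-neighbourhood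
   containing B_T(p, r - eps). *)
Definition pGH_rescaled_conv {R : realType} (X : metricSpace R) (x : X)
  (t : nat -> R) (T : metricSpace R) (p : T) : Prop :=
  forall r eps : R, 0 < r -> 0 < eps ->
  exists n0 : nat, forall n : nat, (n0 <= n)%N ->
  exists f : X -> T,
    [/\ f x = p,
        (forall a b, t n * md x a < r -> t n * md x b < r ->
            `| md (f a) (f b) - t n * md a b | < eps)
      & (forall y, md p y < r - eps ->
            exists2 a, t n * md x a < r & md (f a) y < eps)].

Definition is_tangent {R : realType} (X : metricSpace R) (x : X)
  (T : metricSpace R) (p : T) : Prop :=
  exists t : nat -> R, (forall n, 0 < t n) /\
    (forall M : R, exists N : nat, forall n, (N <= n)%N -> M < t n) /\
    pGH_rescaled_conv x t p.

Definition tan_logratio {R : realType} (Tp : {T : metricSpace R & T}) (r : R)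
  : \bar R :=
  logratio (ncov (@md R (projT1 Tp)) r (cball (@md R (projT1 Tp)) (projT2 Tp) 1)) r.

Definition tangents {R : realType} (X : metricSpace R) (x : X)
  : set {T : metricSpace R & T} :=
  [set Tp | is_tangent x (projT2 Tp)].

(* Main.v *)
Require Import Defs.
From HB Require Import structures.
From mathcomp Require Import all_boot all_order all_algebra.
From mathcomp Require Import all_classical all_reals all_analysis.
From mathcomp Require Import lra ring.
Set Implicit Arguments. Unset Strict Implicit. Unset Printing Implicit Defensive.
Import Order.TTheory GRing.Theory Num.Theory.
Local Open Scope classical_set_scope.
Local Open Scope ring_scope.


Section Basics.
Variable R : realType.

Lemma md_xx (X : metricSpace R) (a : X) : md a a = 0.
Proof. by apply/md_eq0. Qed.

Lemma md_ge0 (X : metricSpace R) (a b : X) : 0 <= md a b.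
Proof.
have := md_tri a b a; rewrite md_xx (md_sym b a) => h.
by rewrite -(@pmulr_rge0 _ 2) // mulr2n mulrDl mul1r.
Qed.

Definition covers {T : Type} (d : T -> T -> R) (r : R) (A : set T) (n : nat)
  (c : nat -> T) := A `<=` [set y | exists2 i : nat, (i < n)%N & d (c i) y < r].

Lemma ncov_le_gen (T1 T2 : Type) (d1 : T1 -> T1 -> R) (d2 : T2 -> T2 -> R)
  r1 r2 (A : set T1) (B : set T2) :
  (forall n c, covers d1 r1 A n c -> exists c', covers d2 r2 B n c') ->
  (ncov d2 r2 B <= ncov d1 r1 A)%E.
Proof.
move=> h; apply: ereal_inf_le_tmp => _ [n [c hc] <-].
by have [c' hc'] := h n c hc; exists n => //; exists c'.
Qed.

Lemma ncov_le_cover {T : Type} (d : T -> T -> R) r A n c :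
  covers d r A n c -> (ncov d r A <= (n%:R)%:E)%E.
Proof. by move=> hc; apply: ereal_inf_lbound; exists n => //; exists c. Qed.

Lemma ncov_ge1 {T : Type} (d : T -> T -> R) r (A : set T) a :
  A a -> (1 <= ncov d r A)%E.
Proof.
move=> Aa; apply: le_ereal_inf_tmp => _ [n [c hc] <-].
have [i ilt _] := hc a Aa; rewrite lee_fin.
by rewrite (_ : 1 = 1%:R) // ler_nat; apply: leq_ltn_trans ilt.
Qed.

Lemma ncov_lt_cover {T : Type} (d : T -> T -> R) r A (N : nat) :
  (ncov d r A < (N.+1%:R)%:E)%E -> exists c, covers d r A N c.
Proof.
move=> /ereal_inf_lt [_ [n [c hc] <-]]; rewrite lte_fin ltr_nat ltnS => nN.
exists c => y /hc [i ilt h]; exists i => //; exact: leq_trans ilt nN.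
Qed.

Lemma ncov_mono_r {T : Type} (d : T -> T -> R) r1 r2 A :
  r1 <= r2 -> (ncov d r2 A <= ncov d r1 A)%E.
Proof.
move=> r12; apply: ncov_le_gen => n c hc; exists c => y /hc [i ilt h].
by exists i => //; apply: lt_le_trans r12.
Qed.

Lemma elog_mono (a b : \bar R) : (1 <= a)%E -> (a <= b)%E -> (elog a <= elog b)%E.
Proof.
case: a => [a| |] //=; case: b => [b| |] //=; rewrite ?lee_fin => a1 ab.
- by rewrite ler_ln ?posrE //; apply: lt_le_trans ltr01 _ => //; apply: le_trans ab.
- by rewrite leey.
Qed.

Lemma elog_ge0 (a : \bar R) : (1 <= a)%E -> (0 <= elog a)%E.
Proof.
case: a => [a| |] //= a1.
by rewrite lee_fin ln_ge0.
Qed.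

End Basics.


Section Ulim.
Variable R : realType.
Variable U : set_system nat.
Hypothesis UU : UltraFilter U.

Lemma U_ex (A : set nat) : U A -> exists k, A k.
Proof. by move=> /filter_ex. Qed.

Lemma U_T : U setT.
Proof. exact: filterT. Qed.

Lemma U_S (A B : set nat) : A `<=` B -> U A -> U B.
Proof. by move=> AB; apply: filterS. Qed.

Lemma U_I (A B : set nat) : U A -> U B -> U (A `&` B).
Proof. by move=> ??; apply: filterI. Qed.

Lemma U_all_lt (P : nat -> nat -> Prop) n :
  (forall i, (i < n)%N -> U [set k | P i k]) ->
  U [set k | forall i, (i < n)%N -> P i k].
Proof.
elim: n => [|n IH] h; first by apply: U_S U_T => k _ i.
apply: U_S (U_I (IH _) (h n _)); last by [].
- move=> k [h1 h2] i; rewrite ltnS leq_eqVlt => /orP[/eqP->//|]; exact: h1.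
- by move=> i ilt; apply: h; apply: ltnW.
Qed.

Lemma U_pigeon (P : nat -> nat -> Prop) n :
  U [set k | exists2 i, (i < n)%N & P i k] ->
  exists2 i, (i < n)%N & U [set k | P i k].
Proof.
move=> h; apply: contrapT => hn.
have hc : forall i, (i < n)%N -> U [set k | ~ P i k].
  move=> i ilt; have [Ui|//] := in_ultra_setVsetC [set k | P i k] UU.
  by exfalso; apply: hn; exists i.
have [k [[i ilt Pik] hk]] := U_ex (U_I h (U_all_lt hc)).
exact: (hk i ilt Pik).
Qed.

Definition ulim (u : nat -> R) : R := sup [set c | U [set k | c <= u k]].

Lemma ulim_near (u : nat -> R) (M : R) : (forall k, `|u k| <= M) ->
  forall e : R, 0 < e -> U [set k | `|u k - ulim u| < e].
Proof.
move=> uM e e0; set S := [set c | U [set k | c <= u k]].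
have hS : has_sup S.
  split; first exists (- M).
    by apply: U_S U_T => k _; have := uM k; rewrite ler_norml => /andP[].
  exists M => c /U_ex [k ck]; apply: le_trans ck _.
  by have := uM k; rewrite ler_norml => /andP[].
have [c Sc ltc] := sup_adherent (e0) hS.
have nS : ~ S (ulim u + e / 2).
  move=> /(sup_upper_bound hS); rewrite /ulim -/S.
  by apply/negP; rewrite -ltNge ltrDl divr_gt0.
have U2 : U [set k | u k < ulim u + e / 2].
  have [//|] := in_ultra_setVsetC [set k | ulim u + e / 2 <= u k] UU.
  by apply: U_S => k /= /negP; rewrite -ltNge.
apply: U_S (U_I Sc U2) => k [/= ck uk]; rewrite /= in uk.
rewrite /= ltr_norml; apply/andP; split.
  by move: ltc ck; rewrite /ulim -/S => ??; lra.
by move: uk e0 => ??; lra.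
Qed.

End Ulim.


Lemma tmul_tri (R : realType) (X : metricSpace R) (T : R) (a b c : X) :
  0 < T -> T * md a c <= T * md a b + T * md b c.
Proof. by move=> T0; rewrite -mulrDr ler_pM2l //; exact: md_tri. Qed.

Lemma tmul_ge0 (R : realType) (X : metricSpace R) (T : R) (a b : X) :
  0 < T -> 0 <= T * md a b.
Proof. by move=> T0; apply: mulr_ge0 (ltW T0) (md_ge0 _ _). Qed.

Section Tangent.
Variables (R : realType) (X : metricSpace R) (x : X) (t : nat -> R).
Hypothesis tpos : forall k, 0 < t k.
Variable U : set_system nat.
Hypothesis UU : UltraFilter U.

Local Notation d := (@md R X).

Definition bseq := {a : nat -> X | exists M : R, forall k, t k * d x (a k) <= M}.

Definition useq (a b : bseq) k := t k * d (sval a k) (sval b k).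

Lemma useq_ge0 a b k : 0 <= useq a b k.
Proof. exact: tmul_ge0. Qed.

Lemma useq_sym a b : useq a b = useq b a.
Proof. by apply: funext => k; rewrite /useq md_sym. Qed.

Lemma useq_bnd (a b : bseq) : exists M, forall k, `|useq a b k| <= M.
Proof.
case: a => a [Ma ha]; case: b => b [Mb hb]; exists (Ma + Mb) => k.
rewrite ger0_norm; last exact: useq_ge0.
rewrite /useq /=; apply: le_trans (tmul_tri (a k) x (b k) (tpos k)) _.
by rewrite md_sym; apply: lerD.
Qed.

Definition D a b := ulim U (useq a b).

Lemma D_near a b (e : R) : 0 < e -> U [set k | `|useq a b k - D a b| < e].
Proof. move=> e0; have [M hM] := useq_bnd a b; by have := ulim_near UU hM e0. Qed.

Lemma D_sym a b : D a b = D b a.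
Proof. by rewrite /D useq_sym. Qed.

Lemma D_le_of (a b : bseq) (c : R) : U [set k | useq a b k <= c] -> D a b <= c.
Proof.
move=> h; apply/ler_addgt0Pr => e e0.
have [k [/= /ltr_normlP [h1 h2] h3]] := U_ex UU (U_I UU (D_near a b e0) h).
by move: h1 h3; lra.
Qed.

Lemma D_ge_of (a b : bseq) (c : R) : U [set k | c <= useq a b k] -> c <= D a b.
Proof.
move=> h; apply/ler_addgt0Pr => e e0.
have [k [/= /ltr_normlP [h1 h2] h3]] := U_ex UU (U_I UU (D_near a b e0) h).
by move: h2 h3; lra.
Qed.

Lemma D_ge0 a b : 0 <= D a b.
Proof. by apply: D_ge_of; apply: (U_S UU _ (U_T UU)) => k _; exact: useq_ge0. Qed.

Lemma D_xx a : D a a = 0.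
Proof.
apply/le_anti; rewrite D_ge0 andbT; apply: D_le_of; apply: (U_S UU _ (U_T UU)) => k _.
by rewrite /useq /= md_xx mulr0.
Qed.

Lemma D_tri a b c : D a c <= D a b + D b c.
Proof.
apply/ler_addgt0Pr => e e0.
have e3 : 0 < e / 3 by apply: divr_gt0.
have [k [[/= /ltr_normlP [h1 h2] /ltr_normlP [h3 h4]] /ltr_normlP [h5 h6]]] :=
  U_ex UU (U_I UU (U_I UU (D_near a c e3) (D_near a b e3)) (D_near b c e3)).
have := tmul_tri (sval a k) (sval b k) (sval c k) (tpos k).
rewrite -/(useq a c k) -/(useq a b k) -/(useq b c k) => ht.
by move: h1 h4 h6 ht; lra.
Qed.

Definition cls (a : bseq) : bseq -> Prop := fun b => D a b = 0.
Definition Tc := {S : bseq -> Prop | exists a, S = cls a}.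
Definition rep (S : Tc) : bseq := sval (cid (svalP S)).
Lemma repP (S : Tc) : sval S = cls (rep S).
Proof. exact: (svalP (cid (svalP S))). Qed.
Definition DT (S1 S2 : Tc) := D (rep S1) (rep S2).

Lemma Tc_eq (S1 S2 : Tc) : sval S1 = sval S2 -> S1 = S2.
Proof.
case: S1 S2 => [A1 p1] [A2 p2] /= e; subst A2; congr exist.
exact: Prop_irrelevance.
Qed.

Lemma cls_eq a b : D a b = 0 -> cls a = cls b.
Proof.
move=> hab; apply: funext => c; apply: propext; rewrite /cls; split => h; apply/le_anti; rewrite D_ge0 andbT.
  by have := D_tri b a c; rewrite (D_sym b a) hab h addr0.
by have := D_tri a b c; rewrite hab h addr0.
Qed.

Lemma D0_of_cls a b : cls a = cls b -> D a b = 0.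
Proof.
move=> e; have : cls b b by rewrite /cls /= D_xx.
by rewrite -e.
Qed.

Lemma D_cls_eq a a' b b' : D a a' = 0 -> D b b' = 0 -> D a b = D a' b'.
Proof.
move=> ha hb; apply/le_anti/andP; split.
  apply: le_trans (D_tri a a' b) _; rewrite ha add0r.
  by apply: le_trans (D_tri a' b' b) _; rewrite (D_sym b' b) hb addr0.
apply: le_trans (D_tri a' a b') _; rewrite (D_sym a' a) ha add0r.
by apply: le_trans (D_tri a b b') _; rewrite hb addr0.
Qed.

Lemma DT_eq0 (S1 S2 : Tc) : DT S1 S2 = 0 <-> S1 = S2.
Proof.
split=> [h|->]; last exact: D_xx.
by apply: Tc_eq; rewrite !repP; apply: cls_eq.
Qed.

Lemma DT_sym (S1 S2 : Tc) : DT S1 S2 = DT S2 S1.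
Proof. exact: D_sym. Qed.

Lemma DT_tri (S1 S2 S3 : Tc) : DT S1 S3 <= DT S1 S2 + DT S2 S3.
Proof. exact: D_tri. Qed.

Definition TX : metricSpace R := @MetricSpace R Tc DT DT_eq0 DT_sym DT_tri.

Definition pt (a : bseq) : Tc := exist _ (cls a) (ex_intro _ a erefl).

Lemma rep_pt a : D a (rep (pt a)) = 0.
Proof. by apply: D0_of_cls; rewrite -repP. Qed.

Lemma DT_ptl a (S : Tc) : DT (pt a) S = D a (rep S).
Proof. by apply: D_cls_eq; [rewrite D_sym; exact: rep_pt| exact: D_xx]. Qed.

Lemma DT_pt a b : DT (pt a) (pt b) = D a b.
Proof. by rewrite DT_ptl; apply: D_cls_eq; [exact: D_xx|rewrite D_sym; exact: rep_pt]. Qed.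

Hypothesis Ucof : forall N, U [set k | (N <= k)%N].
Hypothesis Hbd : forall (R0 eta : R), 0 < R0 -> 0 < eta -> exists (N k0 : nat),
  forall k, (k0 <= k)%N ->
  exists c : nat -> X, covers d (eta / t k) (cball d x (R0 / t k)) N c.

Lemma xs_bnd : exists M : R, forall k, t k * d x ((fun _ : nat => x) k) <= M.
Proof. by exists 0 => k; rewrite md_xx mulr0. Qed.
Definition xs : bseq := exist _ _ xs_bnd.
Definition p0 : TX := pt xs.

Lemma good_set (R0 eps : R) : 0 < R0 -> 0 < eps ->
  U [set k | exists f : X -> TX, [/\ f x = p0,
     (forall a b, t k * d x a < R0 -> t k * d x b < R0 ->
        `|md (f a) (f b) - t k * d a b| < eps)
   & (forall y : TX, md p0 y < R0 - eps ->
        exists2 a, t k * d x a < R0 & md (f a) y < eps)]].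
Proof.
move=> R00 eps0.
pose eta := eps / 6.
have eta0 : 0 < eta by apply: divr_gt0.
have [N [k0 hcov]] := Hbd R00 eta0.
have hz : exists z : nat -> nat -> X, forall k,
    [/\ forall i, t k * d x (z k i) < R0, z k 0%N = x &
        ((k0 <= k)%N -> forall a, t k * d x a < R0 ->
           exists2 i, (i < N.+1)%N & t k * d a (z k i) < 2 * eta)].
  suff : forall k, exists zk : nat -> X,
      [/\ forall i, t k * d x (zk i) < R0, zk 0%N = x &
        ((k0 <= k)%N -> forall a, t k * d x a < R0 ->
           exists2 i, (i < N.+1)%N & t k * d a (zk i) < 2 * eta)].
    by move=> /choice [z hz]; exists z.
  move=> k; case: (pselect (k0 <= k)%N) => hk; last first.
    exists (fun _ => x); split.
    + by move=> i; rewrite md_xx mulr0.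
    + by [].
    + by move=> hk'; exfalso; exact: hk hk'.
  have [c hc] := hcov k hk.
  suff : forall i, exists w, [/\ t k * d x w < R0, i = 0%N -> w = x &
      forall a, (0 < i)%N -> t k * d x a < R0 -> t k * d (c i.-1) a < eta ->
        t k * d a w < 2 * eta].
    move=> /choice [w hw]; exists w; split.
    - by move=> i; case: (hw i).
    - by case: (hw 0%N) => _ -> .
    - move=> _ a ha.
      have ca : cball d x (R0 / t k) a.
        by rewrite /cball /= ler_pdivlMr // mulrC ltW.
      have [i ilt hi] := hc a ca; exists i.+1; first by [].
      case: (hw i.+1) => _ _ h; apply: h => //.
      by move: hi; rewrite ltr_pdivlMr // mulrC.
  case=> [|i].
    exists x; split.
    + by rewrite md_xx mulr0.
    + by [].
    + by move=> a; rewrite ltnn.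
  case: (pselect (exists a, t k * d x a < R0 /\ t k * d (c i) a < eta)).
    move=> [a0 [h1 h2]]; exists a0; split => // a _ ha h3 /=.
    have := tmul_tri a (c i) a0 (tpos k); rewrite (md_sym a (c i)).
    by move: h2 h3; rewrite /= => h2 h3 h4; lra.
  move=> hn; exists x; split => //; first by rewrite md_xx mulr0.
  by move=> a _ ha h3; exfalso; apply: hn; exists a.
have [z {}hz] := hz.
have zb : forall i, exists M : R, forall k, t k * d x ((fun k => z k i) k) <= M.
  by move=> i; exists R0 => k; case: (hz k) => h _ _; exact: ltW.
pose cseq i : bseq := exist _ _ (zb i).
pose P i : TX := pt (cseq i).
have P0 : P 0%N = p0.
  apply/DT_eq0; rewrite DT_pt; apply/le_anti; rewrite D_ge0 andbT.
  apply: D_le_of; apply: (U_S UU _ (U_T UU)) => k _.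
  by rewrite /useq /=; case: (hz k) => _ -> _; rewrite md_xx mulr0.
have UG : U [set k | (k0 <= k)%N /\ forall i, (i < N.+1)%N ->
    forall j, (j < N.+1)%N ->
      `|useq (cseq i) (cseq j) k - D (cseq i) (cseq j)| < eta].
  suff UG2 : U [set k | forall i, (i < N.+1)%N ->
    forall j, (j < N.+1)%N ->
      `|useq (cseq i) (cseq j) k - D (cseq i) (cseq j)| < eta].
    by apply: (U_S UU _ (U_I UU (Ucof k0) UG2)) => k [h1 h2].
  apply: (U_all_lt UU (P := fun i k => forall j, (j < N.+1)%N ->
      `|useq (cseq i) (cseq j) k - D (cseq i) (cseq j)| < eta)) => i _.
  apply: (U_all_lt UU (P := fun j k =>
      `|useq (cseq i) (cseq j) k - D (cseq i) (cseq j)| < eta)) => j _.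
  exact: D_near.
apply: (U_S UU _ UG) => k [hk hG].
have [idx hidx] : exists idx : X -> nat, forall a,
    [/\ (idx a < N.+1)%N, a = x -> idx a = 0%N &
        t k * d x a < R0 -> t k * d a (z k (idx a)) < 2 * eta].
  suff : forall a, exists i, [/\ (i < N.+1)%N, a = x -> i = 0%N &
        t k * d x a < R0 -> t k * d a (z k i) < 2 * eta].
    by move=> /choice [f hf]; exists f.
  move=> a; case: (pselect (a = x)) => [->|ax].
    exists 0%N; split => // _; case: (hz k) => _ -> _.
    by rewrite md_xx mulr0 mulr_gt0.
  case: (pselect (t k * d x a < R0)) => [ha|hna].
    case: (hz k) => _ _ /(_ hk a ha) [i ilt hi].
    by exists i; split.
  by exists 0%N; split => // ha; exfalso; apply: hna.
exists (fun a => P (idx a)); split.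
- by case: (hidx x) => _ -> // _; exact: P0.
- move=> a b ha hb.
  rewrite /= /P DT_pt.
  case: (hidx a) => ia _ /(_ ha) hza.
  case: (hidx b) => ib _ /(_ hb) hzb.
  have := hG _ ia _ ib; rewrite /useq /= => /ltr_normlP [g1 g2].
  have t1 := tmul_tri (z k (idx a)) a (z k (idx b)) (tpos k).
  have t2 := tmul_tri a b (z k (idx b)) (tpos k).
  have t3 := tmul_tri a (z k (idx a)) b (tpos k).
  have t4 := tmul_tri (z k (idx a)) (z k (idx b)) b (tpos k).
  rewrite (md_sym (z k (idx a)) a) in t1.
  rewrite (md_sym (z k (idx b)) b) in t4.
  apply/ltr_normlP; split; move: g1 g2 t1 t2 t3 t4 hza hzb;
    rewrite /eta => *; lra.
- move=> y; rewrite /= /p0 DT_ptl => hy.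
  set b := rep y in hy *.
  have Ub : U [set j | exists2 i, (i < N.+1)%N &
      t j * d (sval b j) (z j i) < 2 * eta].
    apply: (U_S UU _ (U_I UU (Ucof k0) (D_near xs b eps0))).
    move=> j [hj /ltr_normlP [_ h2]]; rewrite /useq /= in h2.
    case: (hz j) => _ _ /(_ hj (sval b j)) []; last by move=> i ??; exists i.
    by move: h2 hy => *; lra.
  have [i ilt Ui] := U_pigeon UU Ub.
  have Dib : D (cseq i) b <= 2 * eta.
    apply: D_le_of; apply: (U_S UU _ Ui) => j hj.
    by rewrite /useq /= md_sym; apply: ltW.
  exists (z k i); first by case: (hz k).
  rewrite /= /P DT_ptl.
  case: (hidx (z k i)) => ilt' _.
  move=> /(_ ltac:(by case: (hz k))) hcl.
  have := hG _ ilt' _ ilt; rewrite /useq /= => /ltr_normlP [g1 g2].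
  have := D_tri (cseq (idx (z k i))) (cseq i) b.
  rewrite (md_sym (z k i)) in hcl.
  by move: g1 hcl Dib eps0; rewrite /eta -/b => *; lra.
Qed.

Lemma tangent_sub : exists phi : nat -> nat, (forall j, (j <= phi j)%N) /\
  pGH_rescaled_conv x (fun j => t (phi j)) p0.
Proof.
pose W (m : nat) := [set k | exists f : X -> TX, [/\ f x = p0,
     (forall a b, t k * d x a < m.+1%:R -> t k * d x b < m.+1%:R ->
        `|md (f a) (f b) - t k * d a b| < (m.+1%:R)^-1)
   & (forall y : TX, md p0 y < m.+1%:R - (m.+1%:R)^-1 ->
        exists2 a, t k * d x a < m.+1%:R & md (f a) y < (m.+1%:R)^-1)]].
have UW : forall m, U (W m).
  by move=> m; apply: good_set; rewrite ?invr_gt0 ltr0n.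
have : forall j, exists k, (j <= k)%N /\ forall m, (m < j.+1)%N -> W m k.
  move=> j.
  have [k [hk1 hk2]] := U_ex UU (U_I UU (Ucof j)
     (U_all_lt UU (n := j.+1) (P := fun m k => W m k) (fun m _ => UW m))).
  by exists k.
move=> /choice [phi hphi]; exists phi; split; first by move=> j; case: (hphi j).
move=> r eps r0 eps0.
have hb0 : 0 <= Num.max r (2 / eps) by rewrite le_max (ltW r0).
pose m := Num.Def.archi_bound (Num.max r (2 / eps)).
have hm := archi_boundP hb0; rewrite -/m in hm.
have hm1 : (m%:R : R) <= m.+1%:R by rewrite ler_nat.
have M0 : (0 : R) < m.+1%:R by rewrite ltr0n.
have rM : r <= m.+1%:R.
  by apply: le_trans hm1; apply: ltW; apply: le_lt_trans hm; rewrite le_max lexx.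
have eM : 2 * (m.+1%:R : R)^-1 < eps.
  have : 2 / eps < m.+1%:R.
    by apply: lt_le_trans hm1; apply: le_lt_trans hm; rewrite le_max lexx orbT.
  by move=> h; rewrite mulrC ltr_pdivrMl //; rewrite ltr_pdivrMr // in h.
have iM : 0 < (m.+1%:R : R)^-1 by rewrite invr_gt0.
have iM' : (m.+1%:R : R)^-1 < eps.
  by move: eM iM; move: (m.+1%:R : R)^-1 => w ??; lra.
exists m => n hn.
have [_ /(_ m) h] := hphi n.
have [f [fx hdist hsurj]] := h ltac:(by rewrite ltnS).
exists f; split => //.
- move=> a b ha hb.
  have := hdist a b (lt_le_trans ha rM) (lt_le_trans hb rM).
  by move=> hh; apply: lt_trans hh _.
- move=> y hy.
  have [a ha hfa] : exists2 a, t (phi n) * d x a < m.+1%:R &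
      md (f a) y < (m.+1%:R)^-1.
    apply: hsurj; move: hy rM iM'; move: (m.+1%:R : R)^-1 => w.
    by move: (m.+1%:R : R) => v ???; lra.
  have hxx : t (phi n) * d x x < m.+1%:R by rewrite md_xx mulr0.
  have := hdist x a hxx ha; rewrite fx => /ltr_normlP [g1 g2].
  have := md_tri p0 y (f a); rewrite (md_sym y (f a)) => g3.
  exists a; last by apply: lt_trans hfa iM'.
  by move: g1 g3 hy hfa eM; move: (m.+1%:R : R)^-1 => w ?????; lra.
Qed.

End Tangent.


Lemma ebound (R : realType) (S : \bar R) : (S < +oo)%E ->
  exists N : nat, (S < (N.+1%:R)%:E)%E.
Proof.
case: S => [s| |] // _; last by exists 0%N; rewrite ltNye.
have hb : 0 <= Num.max 0 s by rewrite le_max lexx.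
exists (Num.Def.archi_bound (Num.max 0 s)); rewrite lte_fin.
apply: le_lt_trans (_ : s <= Num.max 0 s) _; first by rewrite le_max lexx orbT. apply: lt_le_trans (archi_boundP hb) _.
by rewrite ler_nat.
Qed.

Lemma tangent_exists (R : realType) (X : metricSpace R) (x : X) :
  (forall l : R, 0 < l ->
     (limsup0 (fun r => ncov (@md R X) (l * r) (cball (@md R X) x r))
        < +oo)%E) ->
  forall t : nat -> R, (forall k, 0 < t k) ->
  (forall M : R, exists N : nat, forall n, (N <= n)%N -> M < t n) ->
  exists (phi : nat -> nat) (T : metricSpace R) (p : T),
    (forall j, (j <= phi j)%N) /\ pGH_rescaled_conv x (fun j => t (phi j)) p.
Proof.
move=> H t tpos tinf.
have [U [UU sub]] := ultraFilterLemma (@eventually_filter).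
have Ucof : forall N, U [set k | (N <= k)%N] by move=> N; apply: sub; exists N.
have Hbd : forall (R0 eta : R), 0 < R0 -> 0 < eta -> exists (N k0 : nat),
  forall k, (k0 <= k)%N ->
  exists c : nat -> X, covers (@md R X) (eta / t k) (cball (@md R X) x (R0 / t k)) N c.
  move=> R0 eta R00 eta0.
  have l0 : 0 < eta / R0 by apply: divr_gt0.
  have := H _ l0; rewrite /limsup0 => /ereal_inf_lt [_ [del del0 <-] hlt].
  have [N hN] := ebound hlt.
  have [k0 hk0] := tinf (R0 / del).
  exists N, k0 => k hk.
  have tk := tpos k.
  have r0 : 0 < R0 / t k by apply: divr_gt0.
  have rd : R0 / t k < del.
    by rewrite ltr_pdivrMr // mulrC -ltr_pdivrMr //; apply: hk0.
  apply: ncov_lt_cover; apply: le_lt_trans hN.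
  have -> : eta / t k = eta / R0 * (R0 / t k).
    by field; apply/andP; split; apply: lt0r_neq0.
  by apply: ereal_sup_ubound; exists (R0 / t k) => //=; rewrite r0 rd.
have [phi [hphi conv]] := tangent_sub tpos UU Ucof Hbd.
by exists phi, (TX x tpos UU), (p0 x tpos UU).
Qed.


Section PushPull.
Variables (R : realType) (X : metricSpace R) (x : X) (T : metricSpace R) (p : T).
Variable t : nat -> R.
Hypothesis tpos : forall k, 0 < t k.
Hypothesis conv : pGH_rescaled_conv x t p.

Lemma push (lam rho e : R) : 0 < lam -> 0 < e -> lam * (1 + 2 * e) + 2 * e < rho ->
  exists n0, forall n, (n0 <= n)%N ->
  (ncov (@md R T) rho (cball (@md R T) p 1) <=
   ncov (@md R X) (lam * ((1 + 2 * e) / t n)) (cball (@md R X) x ((1 + 2 * e) / t n)))%E.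
Proof.
move=> lam0 e0 hlr.
pose Rd := 2 + 2 * e + lam * (1 + 2 * e).
have Rd0 : 0 < Rd.
  by rewrite /Rd; apply: addr_gt0; [apply: addr_gt0 => //; apply: mulr_gt0|
     apply: mulr_gt0 => //; apply: addr_gt0 => //; apply: mulr_gt0].
have [n0 hn0] := conv Rd0 e0.
exists n0 => n hn; have [f [fx hdist hsurj]] := hn0 n hn.
have tn := tpos n.
apply: ncov_le_gen => N c hc; exists (f \o c) => y; rewrite /cball /= => hy.
have le1 : 0 <= lam * (1 + 2 * e).
  by apply: mulr_ge0; [apply: ltW | apply: addr_ge0 => //; apply: mulr_ge0 => //; apply: ltW].
have [a ha hfa] : exists2 a, t n * md x a < Rd & md (f a) y < e.
  by apply: hsurj; move: hy le1 e0; rewrite /Rd => *; lra.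
have hxx : t n * md x x < Rd by rewrite md_xx mulr0.
have := hdist x a hxx ha; rewrite fx => /ltr_normlP [g1 g2].
have := md_tri p y (f a); rewrite (md_sym y (f a)) => g3.
have hxa : t n * md x a < 1 + 2 * e by move: g1 g3 hy hfa => *; lra.
have ca : cball (@md R X) x ((1 + 2 * e) / t n) a.
  by rewrite /cball /= ler_pdivlMr // mulrC; apply: ltW.
have [i ilt hi] := hc a ca.
exists i => //.
move: hi; rewrite mulrA ltr_pdivlMr // mulrC => hi.
have := tmul_tri x a (c i) tn; rewrite (md_sym a (c i)) => g4.
have hci : t n * md x (c i) < Rd by move: hxa hi g4; rewrite /Rd => *; lra.
have := hdist (c i) a hci ha => /ltr_normlP [g5 g6].
have := md_tri (f (c i)) (f a) y => g7.
by move: g6 g7 hi hfa hlr => *; lra.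
Qed.

Lemma pull (rho e : R) : 0 < rho -> 0 < e -> e < 1 ->
  exists n0, forall n, (n0 <= n)%N ->
  (ncov (@md R X) ((rho + 2 * e) / t n) (cball (@md R X) x ((1 - e) / t n)) <=
   ncov (@md R T) rho (cball (@md R T) p 1))%E.
Proof.
move=> rho0 e0 e1.
pose Rd := rho + 3.
have Rd0 : 0 < Rd by rewrite /Rd; apply: addr_gt0.
have [n0 hn0] := conv Rd0 e0.
exists n0 => n hn; have [f [fx hdist hsurj]] := hn0 n hn.
have tn := tpos n.
apply: ncov_le_gen => N c hc.
have [c' hc'] : exists c' : nat -> X, forall j,
    (exists a, t n * md x a < Rd /\ md (f a) (c j) < e) ->
    t n * md x (c' j) < Rd /\ md (f (c' j)) (c j) < e.
  suff : forall j, exists w : X,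
    (exists a, t n * md x a < Rd /\ md (f a) (c j) < e) ->
    t n * md x w < Rd /\ md (f w) (c j) < e.
    by move=> /choice [g hg]; exists g.
  move=> j; case: (pselect (exists a, t n * md x a < Rd /\ md (f a) (c j) < e)).
    by move=> [a ha]; exists a.
  by move=> hn'; exists x => h; exfalso; apply: hn'.
exists c' => a; rewrite /cball /= => ha.
move: ha; rewrite ler_pdivlMr // mulrC => ha.
have hxx : t n * md x x < Rd by rewrite md_xx mulr0.
have haR : t n * md x a < Rd by move: ha e0 rho0; rewrite /Rd => *; lra.
have := hdist x a hxx haR; rewrite fx => /ltr_normlP [g1 g2].
have [j jlt hj] := hc (f a) ltac:(by rewrite /cball /=; move: g2 ha => *; lra).
exists j => //.
have := md_tri p (f a) (c j); rewrite (md_sym (f a) (c j)) => g3.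
have [hc1 hc2] : t n * md x (c' j) < Rd /\ md (f (c' j)) (c j) < e.
  have [a' h1 h2] : exists2 a', t n * md x a' < Rd & md (f a') (c j) < e.
    by apply: hsurj; move: g2 ha g3 hj e1; rewrite /Rd => *; lra.
  by apply: hc'; exists a'.
have := hdist (c' j) a hc1 haR => /ltr_normlP [g4 g5].
have := md_tri (f (c' j)) (c j) (f a) => g6.
rewrite ltr_pdivlMr // mulrC.
by move: g4 g6 hc2 hj => *; lra.
Qed.

End PushPull.


Section Analysis.
Variable R : realType.

Definition cf (l : R) := (ln l^-1)^-1.
Definition Qf (r : R) := cf r / cf (r / 2).

Lemma lnV_gt0 (r : R) : 0 < r < 1 -> 0 < ln r^-1.
Proof. by case/andP => r0 r1; apply: ln_gt0; rewrite invf_gt1. Qed.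

Lemma cf_gt0 (r : R) : 0 < r < 1 -> 0 < cf r.
Proof. by move=> h; rewrite /cf invr_gt0; apply: lnV_gt0. Qed.

Lemma half_in (r : R) : 0 < r < 1 -> 0 < r / 2 < 1.
Proof. by case/andP => r0 r1; apply/andP; split; lra. Qed.

Lemma Qf_gt0 (r : R) : 0 < r < 1 -> 0 < Qf r.
Proof.
move=> h; rewrite /Qf; apply: divr_gt0; first exact: cf_gt0.
by apply: cf_gt0; apply: half_in.
Qed.

Lemma Qid (r : R) (E : \bar R) : 0 < r < 1 ->
  (E * (cf r)%:E = (Qf r)%:E * (E * (cf (r / 2))%:E))%E.
Proof.
move=> h; have c2 : cf (r / 2) != 0 by apply: lt0r_neq0; apply: cf_gt0; apply: half_in.
by rewrite muleCA -EFinM /Qf divfK.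
Qed.

Lemma Qf_le (eps : R) : 0 < eps -> exists2 del : R, 0 < del &
  forall r, 0 < r < del -> r < 1 -> Qf r <= 1 + eps.
Proof.
move=> eps0; exists (expR (- (ln 2 / eps))); first exact: expR_gt0.
move=> r /andP [r0 rd] r1.
have l2 : 0 < ln (2 : R) by apply: ln_gt0; lra.
have L0 : 0 < ln r^-1 by apply: lnV_gt0; rewrite r0 r1.
have hL : ln 2 / eps < ln r^-1.
  rewrite lnV ?posrE // ltrNr.
  by rewrite -(expRK (- (ln 2 / eps))) ltr_ln ?posrE // expR_gt0.
have e2 : (r / 2)^-1 = r^-1 * 2 by rewrite invfM invrK.
rewrite /Qf /cf e2 lnM ?posrE ?invr_gt0 // invrK.
rewrite mulrC ler_pdivrMr //.
move: hL; rewrite ltr_pdivrMr // => hL.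
by move: hL; lra.
Qed.

Lemma eps_lim (A B : \bar R) :
  (forall eps : R, 0 < eps -> (A <= (1 + eps)%:E * B)%E) -> (A <= B)%E.
Proof.
move=> h; case: B h => [b| |] h; last 2 first.
- by rewrite leey.
- have := h 1 ltr01; rewrite mulrNy gtr0_sg ?mul1e //; lra.
case: A h => [a| |] h; last 2 first.
- by have := h 1 ltr01; rewrite -EFinM.
- by rewrite leNye.
rewrite lee_fin; apply/ler_addgt0Pr => e e0.
pose eps := e / (`|b| + 1).
have eps0 : 0 < eps by apply: divr_gt0 => //; apply: ltr_pwDr.
have := h eps eps0; rewrite -EFinM lee_fin => hab.
have hb : eps * `|b| <= e.
  rewrite /eps mulrAC ler_pdivrMr; last by apply: ltr_pwDr.
  by rewrite ler_wpM2l ?(ltW e0) // lerDl.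
have : eps * b <= eps * `|b| by rewrite ler_wpM2l ?(ltW eps0) // ler_norm.
by move: hab hb; lra.
Qed.

Lemma le_mul_inf (k : R) (A : set (\bar R)) (z : \bar R) : 0 < k ->
  (forall a, A a -> (z <= k%:E * a)%E) -> (z <= k%:E * ereal_inf A)%E.
Proof.
move=> k0 h; rewrite -lee_pdivrMl //; apply: le_ereal_inf_tmp => a Aa.
by rewrite lee_pdivrMl //; apply: h.
Qed.

Lemma Qmul_le (r eps : R) (G : \bar R) : 0 < Qf r -> Qf r <= 1 + eps ->
  (0 <= G \/ G = -oo)%E -> ((Qf r)%:E * G <= (1 + eps)%:E * G)%E.
Proof.
move=> q0 qe [G0|->]; first by apply: lee_wpmul2r.
by rewrite mulrNy gtr0_sg // mul1e leNye.
Qed.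

Lemma limsup_Q (F G : R -> \bar R) :
  (forall r, 0 < r < 1 -> (F r <= (Qf r)%:E * G (r / 2)%R)%E) ->
  (forall r, 0 < r < 1 -> (0 <= G r \/ G r = -oo)%E) ->
  (limsup0 F <= limsup0 G)%E.
Proof.
move=> hFG hG; apply: eps_lim => eps eps0.
have [del del0 hdel] := Qf_le eps0.
have e1 : 0 < 1 + eps by lra.
apply: le_mul_inf => // _ [dl dl0 <-].
pose d1 := Num.min (Num.min del 1) (2 * dl).
have d10 : 0 < d1 by rewrite !lt_min del0 ltr01 /= mulr_gt0.
apply: le_trans (ereal_inf_lbound _) _; first by exists d1.
apply: ge_ereal_sup => _ [r /andP [r0 rd1] <-].
move: rd1; rewrite !lt_min => /andP [/andP [rdel r1] r2].
have h2 : 0 < r / 2 < 1 by apply: half_in; rewrite r0 r1.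
apply: le_trans (hFG r _) _; first by rewrite r0 r1.
apply: le_trans (Qmul_le _ _ _) _.
- by apply: Qf_gt0; rewrite r0 r1.
- by apply: hdel => //; rewrite r0 rdel.
- by apply: hG.
rewrite lee_pmul2l //; apply: ereal_sup_ubound; exists (r / 2) => //.
by rewrite /= divr_gt0 //=; lra.
Qed.

Lemma liminf_Q (F G : R -> \bar R) :
  (forall r, 0 < r < 1 -> (F r <= (Qf r)%:E * G (r / 2)%R)%E) ->
  (forall r, 0 < r < 1 -> (0 <= G r \/ G r = -oo)%E) ->
  (liminf0 F <= liminf0 G)%E.
Proof.
move=> hFG hG; apply: eps_lim => eps eps0.
have [del del0 hdel] := Qf_le eps0.
have e1 : 0 < 1 + eps by lra.
apply: ge_ereal_sup => _ [dl dl0 <-].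
pose d1 := Num.min (Num.min del 1) dl.
have d10 : 0 < d1 by rewrite !lt_min del0 ltr01 dl0.
apply: le_trans (_ : (_ <= ereal_inf (F @` [set r | (0 < r < d1)%R]))%E) _.
  apply: ereal_inf_le_tmp => _ [r /andP [r0 rd1] <-]; exists r => //.
  by rewrite /= r0 /=; move: rd1; rewrite !lt_min => /andP [_ ->].
apply: le_trans (_ : (_ <= (1 + eps)%:E * ereal_inf (G @` [set r | (0 < r < d1 / 2)%R]))%E) _.
  apply: le_mul_inf => // _ [l /andP [l0 ld] <-].
  have hr : 0 < 2 * l < d1 by apply/andP; split; lra.
  apply: le_trans (ereal_inf_lbound _) _; first by exists (2 * l).
  move: (hr) => /andP [r0 rd1]; move: (rd1); rewrite !lt_min => /andP [/andP [rdel r1] r2].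
  apply: le_trans (hFG (2 * l) _) _; first by rewrite r0 r1.
  have -> : 2 * l / 2 = l by field.
  apply: Qmul_le.
  - by apply: Qf_gt0; rewrite r0 r1.
  - by apply: hdel => //; rewrite r0 rdel.
  - by apply: hG; apply/andP; split; lra.
rewrite lee_pmul2l //; apply: ereal_sup_ubound; exists (d1 / 2) => //.
by apply: divr_gt0.
Qed.

End Analysis.


Lemma seq_inf (R : realType) (c : R) (s : nat -> R) : 0 < c ->
  (forall k, 0 < s k < (k.+1%:R)^-1) ->
  forall M, exists N : nat, forall n, (N <= n)%N -> M < c / s n.
Proof.
move=> c0 hs M.
have hb : 0 <= Num.max 0 (M / c) by rewrite le_max lexx.
exists (Num.Def.archi_bound (Num.max 0 (M / c))) => n hn.
have h1 := archi_boundP hb.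
have h2 : (Num.Def.archi_bound (Num.max 0 (M / c)))%:R <= (n.+1%:R : R).
  by rewrite ler_nat; apply: leq_trans hn _.
have h3 : M / c < n.+1%:R.
  by apply: lt_le_trans h2; apply: le_lt_trans h1; rewrite le_max lexx orbT.
have /andP [s0 s1] := hs n.
have n0 : (0 : R) < n.+1%:R by rewrite ltr0n.
have h4 : (n.+1%:R : R) < (s n)^-1.
  by rewrite -[X in X < _]invrK ltf_pV2 ?posrE ?invr_gt0.
rewrite ltr_pdivrMr // mulrC in h3.
apply: lt_trans h3 _; rewrite ltr_pM2l //.
Qed.

Section Main.
Variables (R : realType) (X : metricSpace R) (x : X).
Hypothesis H : forall l : R, 0 < l ->
     (limsup0 (fun r => ncov (@md R X) (l * r) (cball (@md R X) x r)) < +oo)%E.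

Local Notation d := (@md R X).
Definition g (l r : R) := logratio (ncov d (l * r) (cball d x r)) l.
Definition Sf (r : R) := ereal_sup [set tan_logratio (R:=R) Tp r | Tp in tangents x].
Definition Jf (r : R) := ereal_inf [set tan_logratio (R:=R) Tp r | Tp in tangents x].
Definition If (l : R) := limsup0 (g l).
Definition Iif (l : R) := liminf0 (g l).

Lemma g_ge0 l r : 0 < l < 1 -> 0 < r -> (0 <= g l r)%E.
Proof.
move=> hl r0; apply: mule_ge0; last by rewrite lee_fin ltW // cf_gt0.
apply: elog_ge0; apply: (ncov_ge1 _ _ (a := x)).
by rewrite /cball /= md_xx ltW.
Qed.

Lemma term_ge0 (Tp : {T : metricSpace R & T}) (r : R) : 0 < r < 1 -> (0 <= tan_logratio Tp r)%E.
Proof.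
move=> hr; apply: mule_ge0; last by rewrite lee_fin ltW // cf_gt0.
apply: elog_ge0; apply: (ncov_ge1 _ _ (a := projT2 Tp)).
by rewrite /cball /= md_xx ler01.
Qed.

Lemma If_ge0 l : 0 < l < 1 -> (0 <= If l)%E.
Proof.
move=> hl; apply: le_ereal_inf_tmp => _ [del del0 <-].
apply: le_trans (g_ge0 hl (_ : 0 < del / 2)) _; first by apply: divr_gt0.
apply: ereal_sup_ubound; exists (del / 2) => //.
by rewrite /=; move: del0 => /= ?; apply/andP; split; lra.
Qed.

Lemma Iif_ge0 l : 0 < l < 1 -> (0 <= Iif l)%E.
Proof.
move=> hl; apply: (@le_trans _ _ (ereal_inf (g l @` [set r | 0 < r < 1]))).
  apply: le_ereal_inf_tmp => _ [r /andP [r0 _] <-]; exact: g_ge0.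
by apply: ereal_sup_ubound; exists 1 => //=; rewrite ltr01.
Qed.

Lemma Jf_ge0 r : 0 < r < 1 -> (0 <= Jf r)%E.
Proof. by move=> hr; apply: le_ereal_inf_tmp => _ [Tp _ <-]; exact: term_ge0. Qed.

Lemma Sf_cases r : 0 < r < 1 -> (0 <= Sf r \/ Sf r = -oo)%E.
Proof.
move=> hr; case: (pselect (exists Tp, tangents x Tp)) => [[Tp hTp]|hn].
  left; apply: le_trans (term_ge0 Tp hr) _.
  by apply: ereal_sup_ubound; exists Tp.
right; rewrite /Sf.
have -> : [set tan_logratio (R:=R) Tp r | Tp in tangents x] = set0.
  by apply/seteqP; split => // y [Tp hTp _]; exfalso; apply: hn; exists Tp.
exact: ereal_sup0.
Qed.

Lemma U1 r : 0 < r < 1 -> (Sf r <= (Qf r)%:E * If (r / 2)%R)%E.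
Proof.
move=> hr; have /andP [r0 r1] := hr.
apply: ge_ereal_sup => _ [[T p] [t [tpos [tinf conv]]] <-].
have lam0 : 0 < r / 2 by lra.
have e0 : 0 < r / 8 by lra.
have hlr : r / 2 * (1 + 2 * (r / 8)) + 2 * (r / 8) < r by nra.
have [n0 hn0] := push tpos conv lam0 e0 hlr.
apply: le_mul_inf; first exact: Qf_gt0.
move=> _ [del del0 <-]; move: del0 => /= del0.
have e20 : 0 < 1 + 2 * (r / 8) by lra.
have [N hN] := tinf ((1 + 2 * (r / 8)) / del).
pose n := maxn n0 N.
have tn := tpos n.
have hs : 0 < (1 + 2 * (r / 8)) / t n < del.
  apply/andP; split; first exact: divr_gt0.
  rewrite ltr_pdivrMr // [del * _]mulrC -ltr_pdivrMr //; apply: hN.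
  by rewrite /n leq_maxr.
have h1 := hn0 n ltac:(by rewrite /n leq_maxl).
rewrite /tan_logratio /logratio /=.
apply: le_trans (_ : _ <= elog (ncov d (r / 2 * ((1 + 2 * (r / 8)) / t n))
    (cball d x ((1 + 2 * (r / 8)) / t n))) * (cf r)%:E)%E _.
  apply: lee_wpmul2r; first by rewrite lee_fin ltW // cf_gt0.
  apply: elog_mono h1; apply: (ncov_ge1 _ _ (a := p)).
  by rewrite /cball /= md_xx ler01.
rewrite (Qid _ hr) lee_pmul2l //; last by rewrite lte_fin Qf_gt0.
apply: ereal_sup_ubound; exists ((1 + 2 * (r / 8)) / t n) => //.
Qed.

Lemma tangent_of (t : nat -> R) (phi : nat -> nat) (T : metricSpace R) (p : T) :
  (forall k, 0 < t k) ->
  (forall M : R, exists N : nat, forall n, (N <= n)%N -> M < t n) ->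
  (forall j, (j <= phi j)%N) ->
  pGH_rescaled_conv x (fun j => t (phi j)) p ->
  tangents x (existT (fun T : metricSpace R => T) T p).
Proof.
move=> tpos tinf hphi conv; exists (fun j => t (phi j)); split => //.
split => // M; have [N hN] := tinf M; exists N => n hn.
by apply: hN; apply: leq_trans hn (hphi n).
Qed.

Lemma U2 l : 0 < l < 1 -> (If l <= (Qf l)%:E * Sf (l / 2)%R)%E.
Proof.
move=> hl; have /andP [l0 l1] := hl.
rewrite leNgt; apply/negP => hlt.
have hs : forall k : nat, exists s : R, 0 < s < (k.+1%:R)^-1 /\
    ((Qf l)%:E * Sf (l / 2) < g l s)%E.
  move=> k; have k0 : 0 < (k.+1%:R : R)^-1 by rewrite invr_gt0 ltr0n.
  have hI : (If l <= ereal_sup (g l @` [set r : R | (0 < r < (k.+1%:R)^-1)%R]))%E.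
    by apply: ereal_inf_lbound; exists (k.+1%:R)^-1.
  have := lt_le_trans hlt hI.
  by move=> /ereal_sup_gt [_ [s hs <-] h]; exists s.
have [s {}hs] := choice hs.
have e0 : 0 < l / 8 by lra.
have e1 : l / 8 < 1 by lra.
have rho0 : 0 < l / 2 by lra.
have c0 : 0 < 1 - l / 8 by lra.
pose t k := (1 - l / 8) / s k.
have spos : forall k, 0 < s k by move=> k; case: (hs k) => /andP [].
have tpos : forall k, 0 < t k by move=> k; apply: divr_gt0.
have tinf := seq_inf c0 (fun k => (hs k).1).
have [phi [T [p [hphi conv]]]] := tangent_exists H tpos tinf.
have tpos' : forall j, 0 < t (phi j) by [].
have [n0 hn0] := pull tpos' conv rho0 e0 e1.
have h1 := hn0 n0 (leqnn n0).
set s' := s (phi n0) in h1 *.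
have ts : (1 - l / 8) / t (phi n0) = s'.
  by rewrite /t invf_div mulrCA mulfV ?mulr1 //; apply: lt0r_neq0.
rewrite ts in h1.
have rs : (l / 2 + 2 * (l / 8)) / t (phi n0) <= l * s'.
  rewrite -ts [l * (_ / _)]mulrA ler_pM2r ?invr_gt0 //; nra.
have h2 := le_trans (ncov_mono_r _ (cball d x s') rs) h1.
have hT := tangent_of tpos tinf hphi conv.
have := (hs (phi n0)).2; apply/negP; rewrite -leNgt.
rewrite /g /logratio.
apply: le_trans (_ : _ <= elog (ncov (@md R T) (l / 2) (cball (@md R T) p 1)) * (cf l)%:E)%E _.
  apply: lee_wpmul2r; first by rewrite lee_fin ltW // cf_gt0.
  apply: elog_mono h2; apply: (ncov_ge1 _ _ (a := x)).
  by rewrite /cball /= md_xx; apply: ltW; apply: spos.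
rewrite (Qid _ hl) lee_pmul2l //; last by rewrite lte_fin Qf_gt0.
by apply: ereal_sup_ubound; exists (existT (fun T : metricSpace R => T) T p).
Qed.

Lemma L1 l : 0 < l < 1 -> (Iif l <= (Qf l)%:E * Jf (l / 2)%R)%E.
Proof.
move=> hl; have /andP [l0 l1] := hl.
apply: le_mul_inf; first exact: Qf_gt0.
move=> _ [[T p] [t [tpos [tinf conv]]] <-].
have e0 : 0 < l / 8 by lra.
have e1 : l / 8 < 1 by lra.
have rho0 : 0 < l / 2 by lra.
have c0 : 0 < 1 - l / 8 by lra.
have [n0 hn0] := pull tpos conv rho0 e0 e1.
apply: ge_ereal_sup => _ [del del0 <-]; move: del0 => /= del0.
have [N hN] := tinf ((1 - l / 8) / del).
pose n := maxn n0 N.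
have tn := tpos n.
have hs : 0 < (1 - l / 8) / t n < del.
  apply/andP; split; first exact: divr_gt0.
  rewrite ltr_pdivrMr // [del * _]mulrC -ltr_pdivrMr //; apply: hN.
  by rewrite /n leq_maxr.
have h1 := hn0 n ltac:(by rewrite /n leq_maxl).
have rs : (l / 2 + 2 * (l / 8)) / t n <= l * ((1 - l / 8) / t n).
  rewrite [l * (_ / _)]mulrA ler_pM2r ?invr_gt0 //; nra.
have h2 := le_trans (ncov_mono_r _ (cball d x ((1 - l / 8) / t n)) rs) h1.
apply: le_trans (ereal_inf_lbound _) _.
  by exists ((1 - l / 8) / t n).
rewrite /g /logratio.
apply: le_trans (_ : _ <= elog (ncov (@md R T) (l / 2) (cball (@md R T) p 1)) * (cf l)%:E)%E _.
  apply: lee_wpmul2r; first by rewrite lee_fin ltW // cf_gt0.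
  apply: elog_mono h2; apply: (ncov_ge1 _ _ (a := x)).
  by rewrite /cball /= md_xx; apply: ltW; apply: divr_gt0.
by rewrite (Qid _ hl).
Qed.

Lemma L2 r : 0 < r < 1 -> (Jf r <= (Qf r)%:E * Iif (r / 2)%R)%E.
Proof.
move=> hr; have /andP [r0 r1] := hr.
have Q0 := Qf_gt0 hr.
rewrite leNgt; apply/negP => hlt.
have hs : forall k : nat, exists s : R, 0 < s < (k.+1%:R)^-1 /\
    ((Qf r)%:E * g (r / 2) s < Jf r)%E.
  move=> k; have k0 : 0 < (k.+1%:R : R)^-1 by rewrite invr_gt0 ltr0n.
  apply: contrapT => hn.
  suff : (Jf r <= (Qf r)%:E * Iif (r / 2))%E.
    by move=> h; move: (lt_le_trans hlt h); rewrite ltxx.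
  rewrite -lee_pdivrMl //.
  apply: (@le_trans _ _ (ereal_inf (g (r / 2) @` [set s : R | (0 < s < (k.+1%:R)^-1)%R]))).
    apply: le_ereal_inf_tmp => _ [s hs' <-].
    rewrite lee_pdivrMl // leNgt; apply/negP => h; apply: hn; exists s; split => //.
  by apply: ereal_sup_ubound; exists (k.+1%:R)^-1.
have [s {}hs] := choice hs.
have lam0 : 0 < r / 2 by lra.
have e0 : 0 < r / 8 by lra.
have hlr : r / 2 * (1 + 2 * (r / 8)) + 2 * (r / 8) < r by nra.
have c0 : 0 < 1 + 2 * (r / 8) by lra.
pose t k := (1 + 2 * (r / 8)) / s k.
have spos : forall k, 0 < s k by move=> k; case: (hs k) => /andP [].
have tpos : forall k, 0 < t k by move=> k; apply: divr_gt0.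
have tinf := seq_inf c0 (fun k => (hs k).1).
have [phi [T [p [hphi conv]]]] := tangent_exists H tpos tinf.
have tpos' : forall j, 0 < t (phi j) by [].
have [n0 hn0] := push tpos' conv lam0 e0 hlr.
have h1 := hn0 n0 (leqnn n0).
set s' := s (phi n0) in h1 *.
have ts : (1 + 2 * (r / 8)) / t (phi n0) = s'.
  by rewrite /t invf_div mulrCA mulfV ?mulr1 //; apply: lt0r_neq0.
rewrite ts in h1.
have hT := tangent_of tpos tinf hphi conv.
have := (hs (phi n0)).2; apply/negP; rewrite -leNgt.
apply: le_trans (ereal_inf_lbound _) _.
  by exists (existT (fun T : metricSpace R => T) T p).
rewrite /tan_logratio /logratio /=.
apply: le_trans (_ : _ <= elog (ncov d (r / 2 * s') (cball d x s')) * (cf r)%:E)%E _.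
  apply: lee_wpmul2r; first by rewrite lee_fin ltW // cf_gt0.
  apply: elog_mono h1; apply: (ncov_ge1 _ _ (a := p)).
  by rewrite /cball /= md_xx ler01.
by rewrite (Qid _ hr).
Qed.

Theorem main_thm :
  upper_tan_dim x = limsup0 Sf /\ lower_tan_dim x = liminf0 Jf.
Proof.
split.
- apply/le_anti/andP; split.
  + apply: (@limsup_Q R If Sf) => r hr; [exact: U2 | exact: Sf_cases].
  + apply: (@limsup_Q R Sf If) => r hr; [exact: U1 | left; exact: If_ge0].
- apply/le_anti/andP; split.
  + apply: (@liminf_Q R Iif Jf) => r hr; [exact: L1 | left; exact: Jf_ge0].
  + apply: (@liminf_Q R Jf Iif) => r hr; [exact: L2 | left; exact: Iif_ge0].
Qed.

End Main.

Theorem theorem3p4 (R : realType) (X : metricSpace R) (x : X) :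
  (forall l : R, 0 < l ->
     (limsup0 (fun r => ncov (@md R X) (l * r) (cball (@md R X) x r))
        < +oo)%E) ->
  upper_tan_dim x =
    limsup0 (fun r => ereal_sup [set tan_logratio Tp r | Tp in tangents x]) /\
  lower_tan_dim x =
    liminf0 (fun r => ereal_inf [set tan_logratio Tp r | Tp in tangents x]).
Proof.
move=> H; exact: (main_thm H).
Qed.
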